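(* Let $\mathbf A\in\mathbb R^{m\times n}$ be a nonzero matrix with rank $r$ and nonzero singular values $\sigma_1(\mathbf A)\ge\cdots\ge\sigma_r(\mathbf A)>0$, and let $\mathbf b\in\mathbb R^m$ be such that the linear system $\mathbf A\mathbf x=\mathbf b$ is consistent (i.e. $\mathbf b$ lies in the column space of $\mathbf A$). Fix any row partition, any column partition, any step size $\alpha>0$, and any initial vector $\mathbf x^0\in\mathbb R^n$, and let $\mathbf x^k$ denote the $k$th iterate of the doubly stochastic block Gauss--Seidel (DSBGS) algorithm described in the context. Let $\mathbf x^0_\star:=(\mathbf I-\mathbf A^\dagger\mathbf A)\mathbf x^0+\mathbf A^\dagger\mathbf b$, which is the orthogonal projection of $\mathbf x^0$ onto the solution set $\{\mathbf x\in\mathbb R^n:\mathbf A\mathbf x=\mathbf b\}$. Then for every $k\ge 0$, $$\big\|\mathbb E[\mathbf x^k-\mathbf x^0_\star]\big\|_2\le\Big(\max_{1\le i\le r}\Big|1-\frac{\alpha\sigma_i^2(\mathbf A)}{\|\mathbf A\|_F^2}\Big|\Big)^k\|\mathbf x^0-\mathbf x^0_\star\|_2 .$$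
   Context: Notation: $\mathbf A^\dagger$ is the Moore--Penrose pseudoinverse, $\|\cdot\|_F$ the Frobenius norm, $\|\cdot\|_2$ the Euclidean norm (spectral norm for matrices). For $\mathcal I\subseteq[m]=\{1,\dots,m\}$ and $\mathcal J\subseteq[n]$, $\mathbf A_{\mathcal I,\mathcal J}$ is the submatrix of $\mathbf A$ with rows indexed by $\mathcal I$ and columns indexed by $\mathcal J$; $\mathbf A_{:,\mathcal J}$ is the column submatrix indexed by $\mathcal J$; $\mathbf I_{:,\mathcal J}$ denotes the columns of the identity matrix (of the appropriate order) indexed by $\mathcal J$. DSBGS algorithm: Let $\{\mathcal I_1,\dots,\mathcal I_s\}$ be a partition of $[m]$ into nonempty pairwise disjoint sets and $\{\mathcal J_1,\dots,\mathcal J_t\}$ a partition of $[n]$ into nonempty pairwise disjoint sets; let $\mathcal P=\{\mathcal I_1,\dots,\mathcal I_s\}\times\{\mathcal J_1,\dots,\mathcal J_t\}$. Given $\alpha>0$ and $\mathbf x^0\in\mathbb R^n$, for $k=1,2,\dots$: pick $(\mathcal I,\mathcal J)\in\mathcal P$ (independently of the previous choices) with probability $\|\mathbf A_{\mathcal I,\mathcal J}\|_F^2/\|\mathbf A\|_F^2$, and set $$\mathbf x^k=\mathbf x^{k-1}-\alpha\,\frac{\mathbf I_{:,\mathcal J}(\mathbf A_{\mathcal I,\mathcal J})^{T}(\mathbf I_{:,\mathcal I})^{T}}{\|\mathbf A_{\mathcal I,\mathcal J}\|_F^2}\,(\mathbf A\mathbf x^{k-1}-\mathbf b).$$ The expectation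 $\mathbb E$ is over the random choices of the blocks. *)

(* Defs.v *)
From mathcomp Require Import all_boot all_order all_algebra.
From mathcomp Require Import reals.
Set Implicit Arguments. Unset Strict Implicit. Unset Printing Implicit Defensive.
Import Order.TTheory GRing.Theory Num.Theory.
Local Open Scope ring_scope.

Section DSBGS.
Variables (R : realType) (m n : nat).

Definition sqfrob p q (M : 'M[R]_(p, q)) : R := \sum_i \sum_j M i j ^+ 2.
Definition norm2 p (v : 'cV[R]_p) : R := Num.sqrt (\sum_i v i 0 ^+ 2).

Definition blockF2 (A : 'M[R]_(m, n)) (I : {set 'I_m}) (J : {set 'I_n}) : R :=
  \sum_(i in I) \sum_(j in J) A i j ^+ 2.

(* the n x m matrix I_{:,J} (A_{I,J})^T (I_{:,I})^T *)
Definition block_op (A : 'M[R]_(m, n)) (I : {set 'I_m}) (J : {set 'I_n})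
  : 'M[R]_(n, m) :=
  \matrix_(j, i) (if (j \in J) && (i \in I) then A i j else 0).

Definition blk := ({set 'I_m} * {set 'I_n})%type.

Definition dsbgs_step (A : 'M[R]_(m, n)) (b : 'cV[R]_m) (alpha : R) (IJ : blk)
  (x : 'cV[R]_n) : 'cV[R]_n :=
  x - (alpha / blockF2 A IJ.1 IJ.2) *: (block_op A IJ.1 IJ.2 *m (A *m x - b)).

Definition dsbgs_iter (A : 'M[R]_(m, n)) (b : 'cV[R]_m) (alpha : R)
  (x0 : 'cV[R]_n) (s : seq blk) : 'cV[R]_n :=
  foldl (fun x IJ => dsbgs_step A b alpha IJ x) x0 s.

Definition block_prob (A : 'M[R]_(m, n)) (IJ : blk) : R :=
  blockF2 A IJ.1 IJ.2 / sqfrob A.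

(* expectation, over k independent block choices from PR x PC, of f(choices) *)
Definition dsbgs_expect (A : 'M[R]_(m, n)) (PR : {set {set 'I_m}})
  (PC : {set {set 'I_n}}) (k : nat) (f : seq blk -> 'cV[R]_n) : 'cV[R]_n :=
  \sum_(s : k.-tuple blk | all (fun IJ : blk => (IJ.1 \in PR) && (IJ.2 \in PC)) s)
     (\prod_(IJ <- s) block_prob A IJ) *: f s.

Definition is_MP_pinv (A : 'M[R]_(m, n)) (X : 'M[R]_(n, m)) : Prop :=
  [/\ A *m X *m A = A, X *m A *m X = X,
      (A *m X)^T = A *m X & (X *m A)^T = X *m A].

Definition compact_svd r (A : 'M[R]_(m, n)) (U : 'M[R]_(m, r))
  (sigma : 'rV[R]_r) (V : 'M[R]_(n, r)) : Prop :=
  [/\ U^T *m U = 1%:M, V^T *m V = 1%:M, A = U *m diag_mx sigma *m V^T,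
      (forall i, 0 < sigma 0 i) &
      (forall i j : 'I_r, (i <= j)%N -> sigma 0 j <= sigma 0 i)].

End DSBGS.

(* Main.v *)
Require Import Defs.
From mathcomp Require Import all_boot all_order all_algebra.
From mathcomp Require Import reals.
From mathcomp Require Import ring lra.
Import Order.TTheory GRing.Theory Num.Theory.
Local Open Scope ring_scope.


Section Aux.
Variable R : realType.

Lemma part_sum (T : finType) (P : {set {set T}}) (f : T -> R) :
  partition P [set: T] -> \sum_(I in P) \sum_(i in I) f i = \sum_i f i.
Proof.
case/and3P => /eqP cov triv _.
rewrite -big_trivIset // cov; apply: eq_bigl => i; by rewrite in_setT.
Qed.

Lemma part_mem (T : finType) (P : {set {set T}}) (i : T) :
  partition P [set: T] -> \sum_(I in P) ((i \in I)%:R : R) = 1.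
Proof.
move=> hP.
have := @part_sum _ _ (fun j => ((j == i)%:R : R)) hP.
have -> : \sum_j ((j == i)%:R : R) = 1.
  rewrite (bigD1 i) //= eqxx big1 => [|j /negbTE -> //]; by rewrite addr0.
move=> h; rewrite -[RHS]h; apply: eq_bigr => I _.
rewrite big_mkcond (bigD1 i) //= eqxx big1 => [|j /negbTE ->]; last by case: (j \in I).
by case: (i \in I); rewrite addr0.
Qed.


Section Main.
Variables (m n : nat) (A : 'M[R]_(m,n)) (b : 'cV[R]_m) (alpha : R)
  (PR : {set {set 'I_m}}) (PC : {set {set 'I_n}}).
Hypotheses (hPR : partition PR [set: 'I_m]) (hPC : partition PC [set: 'I_n]).
Hypothesis hF : sqfrob A != 0.

Definition cond (IJ : blk m n) := (IJ.1 \in PR) && (IJ.2 \in PC).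

Lemma sum_blockF2 : \sum_(IJ : blk m n | cond IJ) blockF2 A IJ.1 IJ.2 = sqfrob A.
Proof.
transitivity (\sum_(I in PR) \sum_(J in PC) blockF2 A I J); first by rewrite [RHS]pair_big_dep.
rewrite /blockF2.
transitivity (\sum_(I in PR) \sum_(i in I) \sum_(J in PC) \sum_(j in J) A i j ^+ 2).
  by apply: eq_bigr => I _; exact: exchange_big.
rewrite part_sum //; apply: eq_bigr => i _; exact: part_sum.
Qed.

Lemma sum_block_op : \sum_(IJ | cond IJ) block_op A IJ.1 IJ.2 = A^T.
Proof.
transitivity (\sum_(I in PR) \sum_(J in PC) block_op A I J); first by rewrite [RHS]pair_big_dep.
apply/matrixP => j i; rewrite summxE.
under eq_bigr => I _ do rewrite summxE.
transitivity (\sum_(I in PR) \sum_(J in PC) ((i \in I)%:R * ((j \in J)%:R * A i j))).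
  apply: eq_bigr => I _; apply: eq_bigr => J _; rewrite mxE.
  by case: (j \in J); case: (i \in I) => /=; rewrite ?mul1r ?mul0r.
under eq_bigr => I _ do rewrite -mulr_sumr.
by rewrite -mulr_suml part_mem // mul1r -mulr_suml part_mem // mul1r mxE.
Qed.

Lemma blockop_zero (IJ : blk m n) : blockF2 A IJ.1 IJ.2 = 0 -> block_op A IJ.1 IJ.2 = 0.
Proof.
move=> h; apply/matrixP => j i; rewrite !mxE; case: ifP => // /andP[hj hi].
have h1 := psumr_eq0P (fun i _ => sumr_ge0 _ (fun j _ => sqr_ge0 (A i j))) h hi.
have h2 := psumr_eq0P (fun j _ => sqr_ge0 (A i j)) h1 hj.
by apply/eqP; rewrite -sqrf_eq0; apply/eqP.
Qed.

Lemma prob_scale (IJ : blk m n) :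
  (block_prob A IJ * (alpha / blockF2 A IJ.1 IJ.2)) *: block_op A IJ.1 IJ.2
  = (alpha / sqfrob A) *: block_op A IJ.1 IJ.2.
Proof.
case: (eqVneq (blockF2 A IJ.1 IJ.2) 0) => h.
  by rewrite blockop_zero // !scaler0.
rewrite /block_prob; congr (_ *: _); field.
by rewrite h hF.
Qed.

Lemma sum_prob : \sum_(IJ | cond IJ) block_prob A IJ = 1.
Proof. by rewrite /block_prob -mulr_suml sum_blockF2 divff. Qed.

Definition Mbar := 1%:M - (alpha / sqfrob A) *: (A^T *m A).

Lemma step_mean x xs : A *m xs = b ->
  \sum_(IJ | cond IJ) block_prob A IJ *: (dsbgs_step A b alpha IJ x - xs)
  = Mbar *m (x - xs).
Proof.
move=> hxs; have e : A *m x - b = A *m (x - xs) by rewrite mulmxBr hxs.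
transitivity (\sum_(IJ | cond IJ) (block_prob A IJ *: (x - xs)
   - (alpha / sqfrob A) *: (block_op A IJ.1 IJ.2 *m (A *m (x - xs))))).
  apply: eq_bigr => IJ _; rewrite /dsbgs_step e.
  by rewrite addrAC scalerBr scalerA; congr (_ - _); rewrite !scalemxAl prob_scale.
rewrite sumrB -scaler_suml sum_prob scale1r -scaler_sumr -mulmx_suml sum_block_op.
by rewrite /Mbar mulmxBl mul1mx -scalemxAl mulmxA.
Qed.

Definition Lk k := iter k (fun X => X *m Mbar) (1%:M : 'M[R]_n).

Lemma expect_formula k : forall x0 xs, A *m xs = b ->
  dsbgs_expect A PR PC k (fun s => dsbgs_iter A b alpha x0 s - xs)
  = Lk k *m (x0 - xs).
Proof.
elim: k => [|k IH] x0 xs hxs.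
  rewrite /dsbgs_expect (big_pred1 [tuple]) => [|s]; last by rewrite tuple0; apply/esym/eqP.
  by rewrite big_nil scale1r mul1mx.
transitivity (\sum_(IJ | cond IJ) block_prob A IJ *: (Lk k *m (dsbgs_step A b alpha IJ x0 - xs))).
  transitivity (\sum_(IJ | cond IJ) \sum_(t : k.-tuple (blk m n) | all cond t)
     (\prod_(IJ' <- IJ :: t) block_prob A IJ') *: (dsbgs_iter A b alpha x0 (IJ :: t) - xs)).
    rewrite [RHS]pair_big_dep /dsbgs_expect.
    rewrite (reindex (fun p : blk m n * k.-tuple (blk m n) => [tuple of p.1 :: p.2])) //.
    apply: onW_bij; exists (fun t => (thead t, [tuple of behead t])) => [[x t]|t] /=.
      by rewrite theadE; congr pair; apply: val_inj.
    by rewrite -tuple_eta.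
  apply: eq_bigr => IJ _; rewrite -IH // /dsbgs_expect scaler_sumr.
  by apply: eq_bigr => t _; rewrite big_cons scalerA.
under eq_bigr do rewrite scalemxAr.
by rewrite -mulmx_sumr step_mean // mulmxA.
Qed.

End Main.
End Aux.


Section N.
Variable R : realType.

Lemma sq_sum p (v : 'cV[R]_p) : \sum_i v i 0 ^+ 2 = (v^T *m v) 0 0.
Proof. by rewrite mxE; apply: eq_bigr => i _; rewrite mxE expr2. Qed.

Lemma norm2_iso p q (V : 'M[R]_(p, q)) (y : 'cV[R]_q) :
  V^T *m V = 1%:M -> norm2 (V *m y) = norm2 y.
Proof.
move=> hV; rewrite /norm2 !sq_sum trmx_mul mulmxA -(mulmxA y^T) hV mulmx1 //.
Qed.

Lemma diag_bound q (d : 'I_q -> R) (c : R) (k : nat) (w : 'cV[R]_q) :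
  0 <= c -> (forall i, `|d i| <= c) ->
  norm2 (diag_mx (\row_i d i ^+ k) *m w) <= c ^+ k * norm2 w.
Proof.
move=> hc hd; rewrite /norm2 mul_diag_mx.
have hck : 0 <= c ^+ k by rewrite exprn_ge0.
rewrite -(ger0_norm hck) -sqrtr_sqr -sqrtrM ?sqr_ge0 // ler_sqrt; last first.
  by rewrite mulr_ge0 ?sqr_ge0 ?sumr_ge0 // => i _; rewrite sqr_ge0.
rewrite mulr_sumr; apply: ler_sum => i _; rewrite !mxE exprMn.
apply: ler_wpM2r; first exact: sqr_ge0.
rewrite -real_normK ?num_real // normrX lerXn2r ?nnegrE ?exprn_ge0 ?normr_ge0 //.
by rewrite lerXn2r ?nnegrE.
Qed.

End N.


Theorem theorem1 (R : realType) (m n r : nat) (A : 'M[R]_(m, n))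
  (b : 'cV[R]_m) (U : 'M[R]_(m, r)) (sigma : 'rV[R]_r) (V : 'M[R]_(n, r))
  (Ad : 'M[R]_(n, m)) (PR : {set {set 'I_m}}) (PC : {set {set 'I_n}})
  (alpha : R) (x0 : 'cV[R]_n) (k : nat) :
  A != 0 -> \rank A = r -> compact_svd A U sigma V ->
  (exists x, A *m x = b) -> is_MP_pinv A Ad ->
  partition PR [set: 'I_m] -> partition PC [set: 'I_n] -> 0 < alpha ->
  let x0s := (1%:M - Ad *m A) *m x0 + Ad *m b in
  norm2 (dsbgs_expect A PR PC k (fun s => dsbgs_iter A b alpha x0 s - x0s))
  <= (\big[Num.max/0]_(i < r) `|1 - alpha * sigma 0 i ^+ 2 / sqfrob A|) ^+ k
     * norm2 (x0 - x0s).
Proof.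
move=> hA0 _ [hU hV hAsvd _ _] [xe hxe] [p1 p2 p3 p4] hPR hPC halpha.
cbv zeta; set x0s := (1%:M - Ad *m A) *m x0 + Ad *m b.
have hF : sqfrob A != 0.
  apply/negP => /eqP h; move/eqP: hA0; apply; apply/matrixP => i j; rewrite mxE.
  have h1 := psumr_eq0P (fun i _ => sumr_ge0 _ (fun j _ => sqr_ge0 (A i j))) h (erefl true : true).
  have h2 := psumr_eq0P (fun j _ => sqr_ge0 (A i j)) (h1 i) (erefl true : true).
  by apply/eqP; rewrite -sqrf_eq0; apply/eqP; apply: h2.
have hxs : A *m x0s = b.
  rewrite /x0s mulmxDr !mulmxA mulmxBr mulmx1 mulmxA p1 subrr mul0mx add0r.
  by rewrite -hxe mulmxA p1.
rewrite (@expect_formula _ _ _ A b alpha PR PC hPR hPC hF k x0 x0s hxs).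
set d := fun i : 'I_r => 1 - alpha * sigma 0 i ^+ 2 / sqfrob A.
set c := \big[Num.max/0]_(i < r) _.
have hc : 0 <= c.
  by rewrite /c; elim/big_ind: _ => // x y hx hy; rewrite le_max hx.
have hd : forall i, `|d i| <= c.
  by move=> i; rewrite /c (bigD1 i) //= le_max lexx.
set w := diag_mx sigma *m U^T *m Ad^T *m (x0 - xe).
have ev : x0 - x0s = V *m w.
  have -> : x0 - x0s = Ad *m A *m (x0 - xe).
    rewrite /x0s -hxe mulmxBl mul1mx !mulmxA mulmxBr.
    by rewrite opprD opprB addrA; congr (_ - _); rewrite addrC subrK.
  rewrite -p4 trmx_mul hAsvd !trmx_mul trmxK tr_diag_mx /w !mulmxA.
  done.
have hAA : A^T *m A *m V = V *m diag_mx sigma *m diag_mx sigma.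
  rewrite [in LHS]hAsvd !trmx_mul trmxK tr_diag_mx -!mulmxA hV mulmx1.
  by rewrite (mulmxA U^T U) hU mul1mx !mulmxA.
have hMV : Mbar R m n A alpha *m V = V *m diag_mx (\row_i d i).
  rewrite /Mbar mulmxBl mul1mx -scalemxAl hAA.
  apply/matrixP => j i; rewrite !mul_mx_diag !mxE /d.
  field; exact: hF.
have hLV : Lk R m n A alpha k *m V = V *m diag_mx (\row_i d i ^+ k).
  elim: k {hc} => [|k IH] /=.
    by rewrite mul1mx; apply/matrixP => j i; rewrite mul_mx_diag !mxE expr0 mulr1.
  rewrite -mulmxA hMV mulmxA IH.
  by apply/matrixP => j i; rewrite !mul_mx_diag !mxE exprSr mulrA.
rewrite ev mulmxA hLV -mulmxA !(@norm2_iso _ _ _ V _ hV).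
exact: diag_bound.
Qed.
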